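(* Let $(S,\mathcal C)$ be a connectoid and $X\subseteq S$ a countably infinite set. The following are equivalent: (i) there is an end $\omega\in\Omega(S,\mathcal C)$ such that $X$ converges to $\omega$; (ii) for every finite $Y\subseteq S$ there is an element of $\mathcal K(S\setminus Y)$ containing almost all elements of $X$; (iii) there is a necklace containing almost all elements of $X$. Moreover, if $(S,\mathcal C)$ is connected, then (i)–(iii) hold if and only if there is a necklace containing all elements of $X$.
   Context: A connectoid is given by a set $S$ and a set $\mathcal F$ of finite subsets of $S$ such that (i) $F\cup F'\in\mathcal F$ whenever $F,F'\in\mathcal F$ and $F\cap F'\neq\emptyset$, and (ii) $\emptyset\in\mathcal F$ and $\{s\}\in\mathcal F$ for every $s\in S$. A set $C\subseteq S$ is connected if for all $x,y\in C$ there is $F\in\mathcal F$ with $F\subseteq C$ and $x,y\in F$; $\mathcal C$ is the set of connected sets; $(S,\mathcal C)$ is connected if $S\in\mathcal C$. For $S'\subseteq S$, a component of $S'$ is a maximal connected subset of $S'$, and $\mathcal K(S')$ is the set of components of $S'$. ''Almost all'' means all but finitely many. A necklace is a connected set $N$ for which there is a family $(H_n)_{n\in\mathbb N}$ of finite connected sets with $N=\bigcup_n H_n$ and $H_i\cap H_j\neq\emptyset$ iff $|i-j|\le 1$. For a necklace $N$ and finite $Z\subseteq S$, the $Z$-tail of $N$ is the unique element of $\mathcal K(N\setminus Z)$ containing almost all elements of $N$. Two necklaces are equivalent if for every finite $Z\subseteq S$ their $Z$-tails lie in the same element of $\mathcal K(S\setminus Z)$. An end is an equivalence class of necklaces; $\Omega(S,\mathcal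 C)$ is the set of ends; $K(Z,\omega)$ is the element of $\mathcal K(S\setminus Z)$ containing the $Z$-tails of all necklaces in $\omega$. An infinite set $X\subseteq S$ converges to an end $\omega$ if $K(Y,\omega)$ contains almost all elements of $X$ for every finite $Y\subseteq S$. *)

(* Defs.v *)
From mathcomp Require Import all_boot.
From mathcomp Require Import boolp classical_sets functions cardinality.
Set Implicit Arguments. Unset Strict Implicit. Unset Printing Implicit Defensive.
Local Open Scope classical_set_scope.

(* The ground set S is the whole type T; F is the family \mathcal F. *)
Section Connectoid.
Context {T : Type}.

Definition is_connectoid (F : set (set T)) : Prop :=
  (forall A, F A -> finite_set A) /\
  (forall A B, F A -> F B -> A `&` B !=set0 -> F (A `|` B)) /\
  F set0 /\ (forall s : T, F [set s]).

Definition connected_set (F : set (set T)) (C : set T) : Prop :=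
  forall x y, C x -> C y -> exists A, F A /\ A `<=` C /\ A x /\ A y.

Definition component (F : set (set T)) (S' K : set T) : Prop :=
  K `<=` S' /\ connected_set F K /\
  (forall K', connected_set F K' -> K `<=` K' -> K' `<=` S' -> K' = K).

Definition almost_all_in (X A : set T) : Prop := finite_set (X `\` A).

Definition necklace (F : set (set T)) (N : set T) : Prop :=
  connected_set F N /\
  exists H : nat -> set T,
    (forall n, finite_set (H n) /\ connected_set F (H n)) /\
    N = \bigcup_n H n /\
    (forall i j : nat, H i `&` H j !=set0 <-> (i <= j.+1 /\ j <= i.+1)%N).

Definition tail (F : set (set T)) (N Z t : set T) : Prop :=
  component F (N `\` Z) t /\ almost_all_in N t.

Definition necklace_equiv (F : set (set T)) (N1 N2 : set T) : Prop :=
  forall Z, finite_set Z ->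
    exists K t1 t2, component F (~` Z) K /\
      tail F N1 Z t1 /\ tail F N2 Z t2 /\ t1 `<=` K /\ t2 `<=` K.

Definition is_end (F : set (set T)) (w : set (set T)) : Prop :=
  exists N, necklace F N /\ w = [set N' | necklace F N' /\ necklace_equiv F N N'].

Definition end_component (F : set (set T)) (w : set (set T)) (Z K : set T) : Prop :=
  component F (~` Z) K /\
  forall N, w N -> exists t, tail F N Z t /\ t `<=` K.

Definition converges_to (F : set (set T)) (X : set T) (w : set (set T)) : Prop :=
  forall Y, finite_set Y ->
    exists K, end_component F w Y K /\ almost_all_in X K.

End Connectoid.

(* Main.v *)
Require Import Defs.
From mathcomp Require Import all_boot.
From mathcomp Require Import boolp classical_sets functions cardinality.
From mathcomp Require Import zify.
Set Implicit Arguments. Unset Strict Implicit. Unset Printing Implicit Defensive.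
Local Open Scope classical_set_scope.

Lemma finite_ind T (P : set T -> Prop) :
  P set0 -> (forall A x, finite_set A -> P A -> P (x |` A)) ->
  forall A, finite_set A -> P A.
Proof.
move=> P0 PS A.
elim/Pchoice: T => T in P P0 PS A *.
move=> /finite_seqP[s ->]; elim: s => [|x s IH].
  suff -> : [set` [::]] = @set0 T by [].
  by apply/seteqP; split => y.
suff -> : [set` (x :: s)] = x |` [set` s] by apply: PS.
apply/seteqP; split => y /=; rewrite inE.
  by case/orP => [/eqP ->|ys]; [left|right].
by case=> [->|ys]; rewrite ?eqxx //= ys orbT.
Qed.

Section Conn.
Context {T : Type} (F : set (set T)) (hF : is_connectoid F).

Lemma F_fin A : F A -> finite_set A.
Proof. by case: hF => h _; apply: h. Qed.

Lemma F_union A B : F A -> F B -> A `&` B !=set0 -> F (A `|` B).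
Proof. by case: hF => _ [h _]; apply: h. Qed.

Lemma F_one s : F [set s].
Proof. by case: hF => _ [_ [_ h]]. Qed.

Lemma conn_F A : F A -> connected_set F A.
Proof. by move=> FA x y Ax Ay; exists A; do !split. Qed.

Lemma conn_one p : connected_set F [set p].
Proof. exact/conn_F/F_one. Qed.

Lemma conn_union C1 C2 : connected_set F C1 -> connected_set F C2 ->
  C1 `&` C2 !=set0 -> connected_set F (C1 `|` C2).
Proof.
move=> c1 c2 [p [p1 p2]] x y [x1|x2] [y1|y2].
- by have [A [FA [AC [Ax Ay]]]] := c1 x y x1 y1; exists A; split=> //; split; [by move=> z /AC; left|by []].
- have [A [FA [AC [Ax Ap]]]] := c1 x p x1 p1.
  have [B [FB [BC [Bp By]]]] := c2 p y p2 y2.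
  exists (A `|` B); split; first by apply: F_union => //; exists p.
  split; first by move=> z [/AC|/BC]; [left|right].
  by split; [left|right].
- have [A [FA [AC [Ax Ap]]]] := c2 x p x2 p2.
  have [B [FB [BC [Bp By]]]] := c1 p y p1 y1.
  exists (A `|` B); split; first by apply: F_union => //; exists p.
  split; first by move=> z [/AC|/BC]; [right|left].
  by split; [left|right].
- by have [A [FA [AC [Ax Ay]]]] := c2 x y x2 y2; exists A; split=> //; split; [by move=> z /AC; right|by []].
Qed.

Lemma conn_sub_comp S' K C : component F S' K -> connected_set F C ->
  C `<=` S' -> C `&` K !=set0 -> C `<=` K.
Proof.
move=> [KS [cK mK]] cC CS CK.
have := mK (C `|` K) (conn_union cC cK CK) (fun x Kx => or_intror Kx).
move=> /(_ (fun z => (fun h => match h with or_introl h => CS z h | or_intror h => KS z h end))) E.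
by move=> z Cz; rewrite -E; left.
Qed.

Lemma comp_eq S' K1 K2 : component F S' K1 -> component F S' K2 ->
  K1 `&` K2 !=set0 -> K1 = K2.
Proof.
move=> c1 c2 I; apply/seteqP; split.
- apply: conn_sub_comp c2 _ _ I; [by case: c1 => _ []|by case: c1].
- apply: conn_sub_comp c1 _ _ _; [by case: c2 => _ []|by case: c2|by rewrite setIC].
Qed.

Lemma comp_exists S' C : connected_set F C -> C `<=` S' -> C !=set0 ->
  exists K, component F S' K /\ C `<=` K.
Proof.
move=> cC CS [p Cp].
pose K := [set x | exists D, connected_set F D /\ D `<=` S' /\ D p /\ D x].
have CK : C `<=` K by move=> x Cx; exists C.
have KS : K `<=` S' by move=> x [D [_ [DS [_ Dx]]]]; apply: DS.
have cK : connected_set F K.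
  move=> x y [D1 [c1 [S1 [p1 x1]]]] [D2 [c2 [S2 [p2 y2]]]].
  have [A [FA [AD [Ax Ay]]]] := conn_union c1 c2 (ex_intro _ p (conj p1 p2)) (or_introl x1 : (D1 `|` D2) x) (or_intror y2 : (D1 `|` D2) y).
  exists A; split=> //; split=> // z Az.
  exists (D1 `|` D2); split; first exact: conn_union c1 c2 (ex_intro _ p (conj p1 p2)).
  split; first by move=> w [/S1|/S2].
  by split; [left|apply: AD].
exists K; split=> //; split=> //; split=> // K' cK' KK' K'S.
apply/seteqP; split=> // z K'z.
exists K'; split=> //; split=> //; split=> //; apply: KK'; exact: CK.
Qed.

End Conn.

Lemma fU2 T (A B : set T) : finite_set A -> finite_set B -> finite_set (A `|` B).
Proof. by move=> a b; rewrite finite_setU. Qed.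

Lemma aa_meet T (X A B : set T) : infinite_set X -> almost_all_in X A ->
  almost_all_in X B -> exists x, X x /\ A x /\ B x.
Proof.
move=> iX fA fB; apply: contrapT => nex; apply: iX.
apply: (sub_finite_set _ (fU2 fA fB)).
move=> x Xx; case: (pselect (A x)) => Ax; last by left.
case: (pselect (B x)) => Bx; last by right.
by exfalso; apply: nex; exists x.
Qed.

Lemma aa_trans T (X N t : set T) : almost_all_in X N -> almost_all_in N t ->
  almost_all_in X t.
Proof.
move=> f1 f2; apply: (sub_finite_set _ (fU2 f1 f2)).
move=> x [Xx ntx]; case: (pselect (N x)) => Nx; [by right|by left].
Qed.

Section Conn2.
Context {T : Type} (F : set (set T)) (hF : is_connectoid F).

Lemma conn_extend C q P : connected_set F C -> C q -> finite_set P -> P `<=` C ->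
  exists A, F A /\ A `<=` C /\ A q /\ P `<=` A.
Proof.
move=> cC Cq fP; move: P fP; apply: finite_ind.
  move=> _; exists [set q]; split; first exact: F_one.
  by split; [move=> z ->|split].
move=> P x fP IH xPC.
have [A [FA [AC [Aq PA]]]] := IH (fun z Pz => xPC z (or_intror Pz)).
have [B [FB [BC [Bq Bx]]]] := cC q x Cq (xPC x (or_introl erefl)).
exists (A `|` B); split; first by apply: F_union => //; exists q.
split; first by move=> z [/AC|/BC].
split; first by left.
by move=> z [->|/PA]; [right|left].
Qed.

Fixpoint Vch (H : nat -> set T) (m j : nat) : set T :=
  match j with 0 => H m | j'.+1 => Vch H m j' `|` H (m + j) end.

Lemma neck_to_ii X N : necklace F N -> almost_all_in X N ->
  forall Y, finite_set Y -> exists K, component F (~` Y) K /\ almost_all_in X K.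
Proof.
move=> [cN [H [Hfc [NE Hiff]]]] aXN Y fY.
have Hne n : H n !=set0 by have [_ h] := Hiff n n; case: (h (conj (leqnSn n) (leqnSn n))) => z [z1 _]; exists z.
have [m Hm] : exists m, forall n, (m <= n)%N -> H n `&` Y = set0.
  move: Y fY; apply: finite_ind.
    by exists 0%N => n _; rewrite setI0.
  move=> A y fA [mA HA].
  have [my Hy] : exists my, forall n, (my <= n)%N -> ~ H n y.
    case: (pselect (exists a, H a y)) => [[a Ha]|nH]; last first.
      by exists 0%N => n _ Hn; apply: nH; exists n.
    exists a.+2 => n an Hn.
    have [_ /(_ _)] := Hiff a n.
    by have := (Hiff a n).1 (ex_intro _ y (conj Ha Hn)); lia.
  exists (maxn mA my) => n mn; apply/seteqP; split=> // z [Hz [zy|Az]].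
    by rewrite zy in Hz; exact: (Hy n (ltac:(lia)) Hz).
  have := HA n; rewrite (_ : (mA <= n)%N); last by lia.
  by move=> /(_ isT) E; have : (H n `&` A) z by []; rewrite E.
pose Tm := \bigcup_(n in [set n | (m <= n)%N]) H n.
have Vprop j : connected_set F (Vch H m j) /\ Vch H m j `<=` Tm /\
    (forall n, (m <= n <= m + j)%N -> H n `<=` Vch H m j).
  elim: j => [|j [cV [VT VH]]] /=.
    split; first by case: (Hfc m).
    split; first by move=> z Hz; rewrite /Tm; exists m => /=.
    by move=> n nb; have -> : n = m by lia.
  split.
    apply: conn_union => //; first by case: (Hfc (m + j.+1)%N).
    have h1 : ((m + j <= (m + j.+1).+1) /\ (m + j.+1 <= (m+j).+1))%N by lia.
    have [z [z1 z2]] := (Hiff (m + j)%N (m + j.+1)%N).2 h1.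
    by exists z; split => //; apply: (VH (m + j)%N) => //; lia.
  split; first by move=> z [/VT //|Hz]; rewrite /Tm; exists (m + j.+1)%N => //=; lia.
  move=> n nb; case: (pselect (n <= m + j)%N) => nj.
    by move=> z Hz; left; apply: (VH n) => //; lia.
  by have -> : n = (m + j.+1)%N by lia; move=> z Hz; right.
have cT : connected_set F Tm.
  move=> x y [a /= ma Hx] [b /= mb Hy].
  have [cV [VT VH]] := Vprop (a + b)%N.
  have [A [FA [AV [Ax Ay]]]] := cV x y (VH a (ltac:(lia)) x Hx) (VH b (ltac:(lia)) y Hy).
  by exists A; split => //; split => //; move=> z /AV /VT.
have TY : Tm `<=` ~` Y.
  move=> z [n /= mn Hz] Yz; have := Hm n mn.
  by move=> E; have : (H n `&` Y) z by []; rewrite E.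
have [z Hz] := Hne m.
have [K [cK TK]] := comp_exists hF cT TY (ex_intro _ z (ex_intro2 _ _ m (leqnn m) Hz)).
exists K; split => //.
have fU : finite_set (\bigcup_(n in `I_m) H n).
  by apply: bigcup_finite => // n _; case: (Hfc n) => [fn _].
apply: (sub_finite_set _ (fU2 aXN fU)).
move=> x [Xx nKx]; case: (pselect (N x)) => Nx; last by left.
right; move: Nx; rewrite NE => -[n _ Hx].
exists n => //=; case: (ltnP n m) => // mn.
by exfalso; apply: nKx; apply: TK; exists n.
Qed.

End Conn2.

Lemma enum_countable T (X : set T) : countable X -> X !=set0 ->
  exists f : nat -> T, X `<=` range f.
Proof.
move=> cX [x0 Xx0].
case/ocard_geP: cX => g.
exists (fun n => odflt x0 (g n)) => x Xx.
have : (some @` X) (Some x) by exists x.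
move=> /(@surj _ _ _ _ g) [n _ gn]; exists n => //; by rewrite gn.
Qed.

Definition build T (g : nat -> set T * set T * set T -> set T * set T)
  (s0 : set T * set T * set T) : nat -> set T * set T * set T :=
  fix b n := match n with 0 => s0
  | n'.+1 => ((b n').1.1 `|` (b n').1.2, (g n' (b n')).1, (g n' (b n')).2) end.

Section Constr.
Context {T : Type} (F : set (set T)) (hF : is_connectoid F) (X : set T).
Hypothesis iX : infinite_set X.
Hypothesis hII : forall Y, finite_set Y -> exists K, component F (~` Y) K /\ almost_all_in X K.
Variable f : nat -> T.
Hypothesis Xf : X `<=` range f.

Let LC U L := component F (~` U) L /\ almost_all_in X L.
Let Inv U H L := finite_set U /\ F H /\ LC U L /\ H `&` L !=set0.
Let Spec n U H L H' L' := F H' /\ H' `<=` L /\ H `&` H' !=set0 /\ LC (U `|` H) L' /\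
   H' `&` L' !=set0 /\ (forall x, X x -> L x -> ~ L' x -> H' x) /\
   (forall k, (k <= n)%N -> X (f k) -> L (f k) -> H' (f k)).

Lemma step n U H L : Inv U H L -> exists p : set T * set T, Spec n U H L p.1 p.2.
Proof.
move=> [fU [FH [[cL aL] [q [Hq Lq]]]]].
have fU' : finite_set (U `|` H) by apply: fU2 => //; apply: F_fin hF _ FH.
have [K [cK aK]] := hII fU'.
have KL : K `<=` L.
  apply: (conn_sub_comp hF cL); first by case: cK => _ [].
    by case: cK => KS _ z /KS nz Uz; apply: nz; left.
  by have [z [_ [Kz Lz]]] := aa_meet iX aK aL; exists z.
have [r [Xr [Kr _]]] := aa_meet iX aK aK.
pose P := [set x | L x /\ ((X x /\ ~ K x) \/ (exists2 k, (k <= n)%N & f k = x) \/ x = r)].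
have fP : finite_set P.
  apply: (sub_finite_set (B := ((X `\` K) `|` (f @` `I_n.+1)) `|` [set r])).
    move=> x [_ [h|[h|h]]]; first by left; left.
      by case: h => k kn fk; left; right; exists k => //=.
    by right.
  by apply: fU2; [apply: fU2 => //; apply: finite_image|apply: finite_set1].
have [A [FA [AL [Aq PA]]]] := conn_extend hF (proj1 (proj2 cL)) Lq fP (fun x Px => proj1 Px).
exists (A, K); split => //; split => //; split; first by exists q.
split; first by [].
split; first by exists r; split => //; apply: PA; split; [apply: KL|right; right].
split.
  by move=> x Xx Lx nKx; apply: PA; split => //; left.
by move=> k kn Xk Lk; apply: PA; split => //; right; left; exists k.
Qed.

Lemma constr L0 : LC set0 L0 -> exists N, necklace F N /\ X `&` L0 `<=` N.
Proof.
move=> LC0.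
have [r0 [Xr0 [L0r0 _]]] := aa_meet iX (proj2 LC0) (proj2 LC0).
have gex : forall q : nat * (set T * set T * set T), exists p : set T * set T,
    Inv q.2.1.1 q.2.1.2 q.2.2 -> Spec q.1 q.2.1.1 q.2.1.2 q.2.2 p.1 p.2.
  move=> [n [[U H] L]] /=; case: (pselect (Inv U H L)) => hi.
    by have [p hp] := step n hi; exists p.
  by exists (set0, set0).
have [g0 hg0] := choice gex.
pose g n s := g0 (n, s).
pose st := build g (set0, [set r0], L0).
pose U n := (st n).1.1. pose H n := (st n).1.2. pose L n := (st n).2.
have inv n : Inv (U n) (H n) (L n) /\ Spec n (U n) (H n) (L n) (H n.+1) (L n.+1).
  elim: n => [|n [i1 sp]].
    have i0 : Inv (U 0) (H 0) (L 0).
      split; first exact: finite_set0.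
      split; first exact: F_one hF _.
      by split => //; exists r0.
    by split => //; apply: (hg0 (0%N, st 0%N)).
  have i2 : Inv (U n.+1) (H n.+1) (L n.+1).
    case: i1 => fU [FH _]; case: sp => [FH' [_ [_ [LC' [HL' _]]]]].
    split; first by apply: fU2 => //; exact: F_fin hF _ FH.
    by split.
  by split => //; apply: (hg0 (n.+1, st n.+1)).
have Usucc n : U n.+1 = U n `|` H n by [].
have HinU i k : H i `<=` U (i + k).+1.
  elim: k => [|k IH]; first by rewrite addn0 Usucc => z hz; right.
  by rewrite addnS Usucc => z /IH hz; left.
have HnotU n : H n.+1 `<=` ~` U n.
  have [[_ [_ [[[LS _] _] _]]] [_ [HL _]]] := inv n.
  by move=> z /HL /LS.
have Hne n : H n !=set0 by have [[_ [_ [_ [z [hz _]]]]] _] := inv n; exists z.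
have FU n : F (U n.+1).
  elim: n => [|n IH].
    rewrite Usucc (_ : U 0 = set0) // set0U; exact: (proj1 (proj2 (proj1 (inv 0%N)))).
  rewrite Usucc; apply: (F_union hF) => //.
    exact: (proj1 (proj2 (proj1 (inv n.+1)))).
  have [_ [_ [_ [[z [z1 z2]] _]]]] := (inv n).
  by exists z; split => //; have := HinU n 0%N z z1; rewrite addn0.
pose N := \bigcup_n H n.
have UN n : U n `<=` N.
  elim: n => [|n IH] z //; rewrite Usucc => -[/IH //|hz]; by exists n.
exists N; split.
  split.
    move=> x y [a _ Hx] [b _ Hy].
    have hx : U (a + b).+1 x := HinU a b x Hx.
    have hy : U (a + b).+1 y by rewrite addnC; exact: HinU b a y Hy.
    have [A [FA [AU [Ax Ay]]]] := conn_F (FU (a + b)%N) hx hy.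
    by exists A; split => //; split => //; move=> z /AU /UN.
  exists H; split.
    move=> n; have FH := proj1 (proj2 (proj1 (inv n))).
    by split; [exact: F_fin hF _ FH|exact: conn_F].
  split; first by [].
  move=> i j; split.
    move=> [z [Hi Hj]].
    have : (i.+2 <= j \/ j.+2 <= i \/ (i <= j.+1 /\ j <= i.+1))%N by lia.
    case=> [ij|[ji|//]]; exfalso.
      case: j Hj ij => // j' Hj ij.
      apply: (HnotU j' z Hj).
      have e : ((i + (j' - i.+1)).+1 = j')%N by lia.
      by have := HinU i (j' - i.+1)%N z Hi; rewrite e.
    case: i Hi ji => // i' Hi ji.
    apply: (HnotU i' z Hi).
    have e : ((j + (i' - j.+1)).+1 = i')%N by lia.
    by have := HinU j (i' - j.+1)%N z Hj; rewrite e.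
  move=> [ij ji].
  have : (i = j \/ j = i.+1 \/ i = j.+1) by lia.
  case=> [<-|[->|->]].
  - by have [z hz] := Hne i; exists z.
  - by have [_ [_ [_ [hs _]]]] := inv i.
  - by have [_ [_ [_ [[z [z1 z2]] _]]]] := inv j; exists z.
move=> x [Xx L0x].
have [k _ fk] := Xf Xx.
apply: contrapT => nN.
have nH n : ~ H n x by move=> hx; apply: nN; exists n.
have allL j : L j x.
  elim: j => // j IH; apply: contrapT => nL.
  have [_ [_ [_ [_ [_ [_ [cov _]]]]]]] := inv j.
  by apply: (nH j.+1); apply: cov.
have [_ [_ [_ [_ [_ [_ [_ cov]]]]]]] := inv k.
apply: (nH k.+1); rewrite -fk; apply: cov; [done|by rewrite fk|by rewrite fk; apply: allL].
Qed.

End Constr.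

Theorem proposition2p2 (T : Type) (F : set (set T)) (X : set T) :
  is_connectoid F -> countable X -> infinite_set X ->
  ((exists w, is_end F w /\ converges_to F X w) <->
     (forall Y, finite_set Y -> exists K, component F (~` Y) K /\ almost_all_in X K)) /\
  ((forall Y, finite_set Y -> exists K, component F (~` Y) K /\ almost_all_in X K) <->
     (exists N, necklace F N /\ almost_all_in X N)) /\
  (connected_set F setT ->
     ((exists w, is_end F w /\ converges_to F X w) <->
        (exists N, necklace F N /\ X `<=` N))).
Proof.
move=> hF cX iX.
have [f Xf] := enum_countable cX (infinite_setN0 iX).
set P1 := (exists w, _). set P2 := (forall Y, _). set P3 := (exists N, _).
have p12 : P1 -> P2.
  move=> [w [_ cw]] Y fY; have [K [[cK _] aK]] := cw Y fY; by exists K.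
have p23 : P2 -> P3.
  move=> hII; have [L0 [cL0 aL0]] := hII set0 (finite_set0 T).
  have [N [nN XN]] := constr hF iX hII Xf (conj cL0 aL0).
  exists N; split => //.
  apply: (sub_finite_set _ aL0) => x [Xx nNx]; split => // L0x; apply: nNx; exact: XN.
have p32 : P3 -> P2 by move=> [N [nN aN]] Y fY; exact: (neck_to_ii hF nN aN fY).
have p21 : P2 -> P1.
  move=> hII; have [N [nN aN]] := p23 hII.
  exists [set N' | necklace F N' /\ necklace_equiv F N N']; split; first by exists N.
  move=> Y fY; have [K [cK aK]] := hII Y fY.
  exists K; split => //; split => // N' [_ eq].
  have [K1 [t1 [t2 [cK1 [[ct1 at1] [tl2 [t1K1 t2K1]]]]]]] := eq Y fY.
  exists t2; split => //.
  have at1X := aa_trans aN at1.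
  have [z [_ [z1 zK]]] := aa_meet iX at1X aK.
  have E := comp_eq hF cK1 cK (ex_intro _ z (conj (t1K1 z z1) zK)).
  by rewrite -E.
split; first by split.
split; first by split.
move=> cT; split.
  move=> /p12 hII.
  have L0T : component F (~` set0) setT.
    split; first by move=> x _ /=.
    split => // K' _ TK' _; apply/seteqP; split => //.
  have aT : almost_all_in X setT by rewrite /almost_all_in setDT.
  have [N [nN XN]] := constr hF iX hII Xf (conj L0T aT).
  by exists N; split => // x Xx; apply: XN.
move=> [N [nN XN]]; apply: p21; apply: p32; exists N; split => //.
by rewrite /almost_all_in (_ : X `\` N = set0) //; apply/seteqP; split => // x [/XN].
Qed.
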